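(* Let $E$ be a locally convex space. Then every bounded subset of $E$ is either tame, or contains a sequence which is an $l^1$-sequence.
   Context: ${\rm eqc}(E^* )$ is the family of equicontinuous weak-star compact subsets of the dual $E^*$. A sequence of real functions $(f_n)$ on a set $X$ is independent if there are $a<b$ with $\bigcap_{n\in P} f_n^{-1}(-\infty,a)\cap\bigcap_{n\in M} f_n^{-1}(b,\infty)\neq\emptyset$ for all finite disjoint $P,M\subseteq\mathbb N$; a bounded family of real functions is tame if it contains no independent sequence. A bounded $B\subseteq E$ is tame if for every $K\in{\rm eqc}(E^* )$ the family $\{\varphi\mapsto\varphi(b)\}_{b\in B}$ of functions on $K$ is tame. A bounded sequence $(x_n)$ in $E$ is an $l^1$-sequence if there exist a continuous seminorm $\rho$ on $E$ and $\delta>0$ with $\delta\sum_{i=1}^n|c_i|\le\rho(\sum_{i=1}^n c_ix_i)$ for all $n$ and real $c_1,\dots,c_n$. *)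

(* Defs.v *)
(* Real locally convex spaces = [tvsType R]
   (MathComp-Analysis' interface for locally convex topological vector
   spaces) over a [realType R]. *)
From HB Require Import structures.
From mathcomp Require Import all_boot all_order all_algebra.
From mathcomp Require Import all_classical all_reals all_analysis.

Set Implicit Arguments.
Unset Strict Implicit.
Unset Printing Implicit Defensive.

Import Order.TTheory GRing.Theory Num.Theory.
Import numFieldTopology.Exports numFieldNormedType.Exports.
Local Open Scope classical_set_scope.
Local Open Scope ring_scope.

Section LCS.
Variables (R : realType) (E : tvsType R).

Definition tvs_bounded (B : set E) : Prop :=
  forall U : set E, nbhs (0 : E) U ->
    exists2 r : R, 0 < r &
      forall t : R, r <= `|t| -> B `<=` [set t *: u | u in U].

Definition dual_elt (phi : E -> R) : Prop :=
  (forall (a : R) (x y : E), phi (a *: x + y) = a * phi x + phi y) /\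
  continuous phi.

Definition equicontinuous_set (K : set (E -> R)) : Prop :=
  forall (x : E) (eps : R), 0 < eps ->
    nbhs x [set y | forall phi, K phi -> `|phi y - phi x| < eps].

(** The weak-star
    topology is the topology of pointwise convergence on E, i.e. the subspace
    topology inherited from the product space {ptws E -> R}. *)
Definition eqc (K : set (E -> R)) : Prop :=
  (forall phi, K phi -> dual_elt phi) /\
  equicontinuous_set K /\
  compact (K : set {ptws E -> R}).

End LCS.

Definition independent_seq (R : realType) (T : Type) (X : set T)
    (f : nat -> T -> R) : Prop :=
  exists a b : R, a < b /\
    forall P M : seq nat, (forall n, n \in P -> n \notin M) ->
      exists2 x, X x &
        (forall n, n \in P -> f n x < a) /\ (forall n, n \in M -> b < f n x).

(** A family F of real functions on X (given as a set of functions) is tame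
    if it contains no independent sequence.  (Boundedness of the family is a
    standing assumption in the paper, not part of the notion.) *)
Definition tame_family (R : realType) (T : Type) (X : set T)
    (F : set (T -> R)) : Prop :=
  ~ exists f : nat -> T -> R, (forall n, F (f n)) /\ independent_seq X f.

Definition tame_set (R : realType) (E : tvsType R) (B : set E) : Prop :=
  forall K : set (E -> R), eqc K ->
    tame_family K [set (fun phi : E -> R => phi b) | b in B].

Definition cont_seminorm (R : realType) (E : tvsType R) (rho : E -> R) : Prop :=
  (forall x y : E, rho (x + y) <= rho x + rho y) /\
  (forall (t : R) (x : E), rho (t *: x) = `|t| * rho x) /\
  continuous rho.

Definition l1_sequence (R : realType) (E : tvsType R) (x : nat -> E) : Prop :=
  tvs_bounded [set x n | n in [set: nat]] /\
  exists rho : E -> R, cont_seminorm rho /\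
    exists2 delta : R, 0 < delta &
      forall (n : nat) (c : nat -> R),
        delta * (\sum_(i < n) `|c i|) <= rho (\sum_(i < n) c i *: x i).

(* Main.v *)
Require Import Defs.
Set Warnings "-notation-overridden,-ambiguous-paths,-notation-incompatible-prefix".
From HB Require Import structures.
From mathcomp Require Import all_boot all_order all_algebra.
From mathcomp Require Import all_classical all_reals all_analysis.
From mathcomp Require Import lra.
Import Order.TTheory GRing.Theory Num.Theory.
Import numFieldTopology.Exports numFieldNormedType.Exports.
Local Open Scope classical_set_scope.
Local Open Scope ring_scope.
Set Implicit Arguments. Unset Strict Implicit.
Lemma lin0 (R : realType) (E : tvsType R) (phi : E -> R) :
  dual_elt phi -> phi 0 = 0.
Proof.
case=> L _; have := L 1 0 0; rewrite scale1r addr0 mul1r => h.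
by apply: (addrI (phi 0)); rewrite addr0 -h.
Qed.

Lemma linD (R : realType) (E : tvsType R) (phi : E -> R) x y :
  dual_elt phi -> phi (x + y) = phi x + phi y.
Proof. by case=> L _; have := L 1 x y; rewrite scale1r mul1r. Qed.

Lemma linZ (R : realType) (E : tvsType R) (phi : E -> R) t x :
  dual_elt phi -> phi (t *: x) = t * phi x.
Proof. move=> d; have := d.1 t x 0; rewrite !addr0 lin0 // addr0; exact. Qed.

Lemma linS (R : realType) (E : tvsType R) (phi : E -> R) n (c : nat -> R) (x : nat -> E) :
  dual_elt phi -> phi (\sum_(i < n) c i *: x i) = \sum_(i < n) c i * phi (x i).
Proof.
move=> d; elim: n => [|n IH]; first by rewrite !big_ord0 lin0.
by rewrite !big_ord_recr /= linD // IH linZ.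
Qed.

Lemma absorb (R : realType) (E : tvsType R) (U : set E) (v : E) :
  nbhs 0 U -> exists2 s : R, 0 < s & U (s *: v).
Proof.
move=> U0; have /= := scale_continuous ((0:R^o), v) U.
rewrite scale0r => /(_ U0) [] /= B [B1 B2] BU.
have [e e0 He] := B1.
exists (e/2); first by rewrite divr_gt0.
apply: (BU (e/2, v)); split => /=; last exact: nbhs_singleton.
apply: He => /=. rewrite sub0r normrN ger0_norm ?ltr_pdivrMr ?divr_ge0 ?ltW //.
by rewrite ltr_pMr // ltr1n.
Qed.
Definition rhoK (R : realType) (E : tvsType R) (K : set (E -> R)) (v : E) : R :=
  sup [set `|phi v| | phi in K].

Lemma rho_ub (R : realType) (E : tvsType R) (K : set (E -> R)) (v : E) :
  (forall phi, K phi -> dual_elt phi) -> equicontinuous_set K ->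
  has_ubound [set `|phi v| | phi in K].
Proof.
move=> KD Keq; have [s s0 Us] := @absorb _ _ _ v (Keq 0 1 ltr01).
exists s^-1 => _ [phi Kphi <-].
have := Us phi Kphi; rewrite (lin0 (KD _ Kphi)) subr0 (linZ _ _ (KD _ Kphi)) normrM gtr0_norm //.
by move=> h; apply/ltW; rewrite -ltr_pdivlMl // mulr1 in h.
Qed.

Lemma rho_ge (R : realType) (E : tvsType R) (K : set (E -> R)) (v : E) phi :
  (forall phi, K phi -> dual_elt phi) -> equicontinuous_set K -> K phi ->
  `|phi v| <= rhoK K v.
Proof. by move=> KD Keq Kp; apply: ub_le_sup; [exact: rho_ub|exists phi]. Qed.

Lemma rho_le (R : realType) (E : tvsType R) (K : set (E -> R)) (v : E) c :
  K !=set0 -> (forall phi, K phi -> `|phi v| <= c) -> rhoK K v <= c.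
Proof.
move=> [phi Kp] H; apply: ge_sup; first by exists `|phi v|, phi.
by move=> _ [psi Kpsi <-]; exact: H.
Qed.

Lemma rho_semi (R : realType) (E : tvsType R) (K : set (E -> R)) :
  K !=set0 -> (forall phi, K phi -> dual_elt phi) -> equicontinuous_set K ->
  cont_seminorm (rhoK K).
Proof.
move=> K0 KD Keq.
have rhoZ : forall t x, rhoK K (t *: x) <= `|t| * rhoK K x.
  move=> t x; apply: rho_le => // phi Kp; rewrite (linZ _ _ (KD _ Kp)) normrM.
  by rewrite ler_wpM2l // rho_ge.
split; [|split].
- move=> x y; apply: rho_le => // phi Kp; rewrite (linD _ _ (KD _ Kp)).
  by apply: (le_trans (ler_normD _ _)); apply: lerD; apply: rho_ge.
- move=> t x; apply/eqP; rewrite eq_le rhoZ /=.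
  have [->|t0] := eqVneq t 0.
    rewrite normr0 mul0r; case: K0 => phi Kp; exact: le_trans (normr_ge0 _) (rho_ge _ KD Keq Kp).
  rewrite -ler_pdivlMl ?normr_gt0 //.
  have := rhoZ t^-1 (t *: x); rewrite scalerA mulVf // scale1r normrV ?unitfE //.
- move=> v; apply/cvgrPdist_lt => e e0.
  have := Keq v (e/2) (divr_gt0 e0 (ltr0Sn _ 1)).
  apply: filterS => w Hw.
  have H1 : rhoK K w <= rhoK K v + e/2.
    apply: rho_le => // phi Kp; rewrite -lerBlDl.
    apply: le_trans (ltW (Hw phi Kp)); apply: le_trans (lerB_dist _ _).
    by apply: lerB => //; apply: rho_ge.
  have H2 : rhoK K v <= rhoK K w + e/2.
    apply: rho_le => // phi Kp; rewrite -lerBlDl.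
    apply: le_trans (ltW (Hw phi Kp)); rewrite distrC.
    apply: le_trans (lerB_dist _ _).
    by apply: lerB => //; apply: rho_ge.
  have he : e / 2 < e by rewrite ltr_pdivrMr // ltr_pMr // ltr1n.
  idtac.
  apply: le_lt_trans he; rewrite ler_norml; apply/andP; split; lra.
Qed.
Unset Implicit Arguments.
Theorem theorem6p2 (R : realType) (E : tvsType R) (B : set E) :
  tvs_bounded B ->
  tame_set B \/
  exists x : nat -> E, (forall n, B (x n)) /\ l1_sequence x.
Proof.
move=> hB; case: (pselect (tame_set B)) => [|nT]; [by left|right].
move: nT => /existsNP [K] /not_implyP [eK] /contrapT [f [Ff [a [b [ab ind]]]]].
have /choice [x hx] : forall n, exists y, B y /\ (fun phi : E -> R => phi y) = f n.
  by move=> n; have [y By e] := Ff n; exists y.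
have [KD [Keq _]] := eK.
have K0 : K !=set0.
  by have [y Ky _] := ind [::] [::] (fun _ _ => isT); exists y.
exists x; split; first by move=> n; exact: (hx n).1.
split.
  move=> U U0; have [r r0 H] := hB U U0; exists r => // t tr _ [n _ <-].
  exact: H tr _ (hx n).1.
exists (rhoK K); split; first exact: rho_semi.
exists ((b - a) / 2); first by rewrite divr_gt0 // subr_gt0.
move=> n c.
pose P := [seq i <- iota 0 n | 0 <= c i].
pose M := [seq i <- iota 0 n | c i < 0].
have dPM : forall i, i \in P -> i \notin M.
  by move=> i; rewrite !mem_filter => /andP[ci _]; apply/negP => /andP[]; rewrite ltNge ci.
have dMP : forall i, i \in M -> i \notin P.
  by move=> i iM; apply/negP => iP; move: (dPM i iP); rewrite iM.
have [y Ky [hy1 hy2]] := ind P M dPM.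
have [z Kz [hz1 hz2]] := ind M P dMP.
have fE : forall i (psi : E -> R), f i psi = psi (x i).
  by move=> i psi; rewrite -(hx i).2.
have key : (b - a) * (\sum_(i < n) `|c i|) <= z (\sum_(i < n) c i *: x i) - y (\sum_(i < n) c i *: x i).
  rewrite (linS _ _ _ (KD _ Kz)) (linS _ _ _ (KD _ Ky)) -sumrB mulr_sumr.
  apply: ler_sum => i _.
  have iin : (i : nat) \in iota 0 n by rewrite mem_iota leq0n add0n ltn_ord.
  have [ci|ci] := lerP 0 (c i).
    have iP : (i : nat) \in P by rewrite mem_filter ci iin.
    have := hy1 _ iP; have := hz2 _ iP; rewrite !fE ger0_norm // => h1 h2.
    nra.
  have iM : (i : nat) \in M by rewrite mem_filter ci iin.
  have := hy2 _ iM; have := hz1 _ iM; rewrite !fE ltr0_norm // => h1 h2.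
  nra.
have rz := rho_ge (\sum_(i < n) c i *: x i) KD Keq Kz.
have ry := rho_ge (\sum_(i < n) c i *: x i) KD Keq Ky.
move: key rz ry.
set s := \sum_(i < n) c i *: x i.
set S := \sum_(i < n) `|c i|.
move=> key rz ry.
have h1 := ler_norm (z s).
have h2 : - y s <= `|y s| by rewrite -normrN ler_norm.
rewrite mulrAC ler_pdivrMr //; lra.
Qed.
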